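(* Let $(V,\varrho,K)$ be a representation of a difference Lie algebra $(\mathfrak g,D)$. Set $\mathfrak C^1=\mathrm{Hom}(\mathfrak g,V)$ and $\mathfrak C^n=\mathrm{Hom}(\wedge^n\mathfrak g,V)\oplus\mathrm{Hom}(\wedge^{n-1}\mathfrak g,V)$ for $n\ge2$, and define $\delta_\varrho:\mathfrak C^n\to\mathfrak C^{n+1}$ by $\delta_\varrho(f,\theta)=(d^{CE}_\varrho f,\ \partial\theta+T(f))$ (for $n=1$, $\delta_\varrho f=(d^{CE}_\varrho f,T(f))$). Then $\delta_\varrho\circ\delta_\varrho=0$.
   Context: A difference Lie algebra $(\mathfrak g,D)$: a Lie algebra with linear $D$ such that $D[x,y]=[x,D(y)]-[y,D(x)]+[D(x),D(y)]$. A representation $(V,\varrho,K)$: a Lie algebra representation $\varrho:\mathfrak g\to\mathfrak{gl}(V)$ and linear $K:V\to V$ with $K(\varrho(x)u)=\varrho(D(x))u+\varrho(x)K(u)+\varrho(D(x))K(u)$. $d^{CE}_\varrho$ is the Chevalley–Eilenberg differential of $\mathfrak g$ with coefficients in $(V,\varrho)$. For $\theta\in\mathrm{Hom}(\wedge^{n-1}\mathfrak g,V)$: $\partial\theta(x_1,\dots,x_n)=\sum_{i=1}^n(-1)^{i+1}\varrho(x_i)\theta(x_1,\dots,\hat x_i,\dots,x_n)+\sum_{i=1}^n(-1)^{i+1}\varrho(D(x_i))\theta(x_1,\dots,\hat x_i,\dots,x_n)+\sum_{i<j}(-1)^{i+j}\theta([x_i,x_j],x_1,\dots,\hat x_i,\dots,\hat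 x_j,\dots,x_n)$. For $f\in\mathrm{Hom}(\wedge^n\mathfrak g,V)$: $T(f)(x_1,\dots,x_n)=(-1)^n\big(\sum_{k=1}^n\sum_{1\le i_1<\cdots<i_k\le n}f(y_1,\dots,y_n)-K(f(x_1,\dots,x_n))\big)$, where $y_j=D(x_j)$ if $j\in\{i_1,\dots,i_k\}$ and $y_j=x_j$ otherwise. *)

(* Defs.v *)
From HB Require Import structures.
From mathcomp Require Import all_boot all_order all_algebra.
Set Implicit Arguments. Unset Strict Implicit. Unset Printing Implicit Defensive.
Import GRing.Theory.
Local Open Scope ring_scope.

Section DiffLie.
Variables (R : fieldType) (g V : lmodType R).

Definition is_lie_bracket (br : g -> g -> g) : Prop :=
  [/\ (forall (a : R) x y z, br (a *: x + y) z = a *: br x z + br y z),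
      (forall (a : R) x y z, br z (a *: x + y) = a *: br z x + br z y),
      (forall x, br x x = 0) &
      (forall x y z, br x (br y z) + br y (br z x) + br z (br x y) = 0)].

Definition is_difference_op (br : g -> g -> g) (D : g -> g) : Prop :=
  (forall (a : R) x y, D (a *: x + y) = a *: D x + D y) /\
  (forall x y, D (br x y) = br x (D y) - br y (D x) + br (D x) (D y)).

Definition is_lie_rep (br : g -> g -> g) (rho : g -> V -> V) : Prop :=
  [/\ (forall (a : R) x y v, rho (a *: x + y) v = a *: rho x v + rho y v),
      (forall (a : R) x u v, rho x (a *: u + v) = a *: rho x u + rho x v) &
      (forall x y v, rho (br x y) v = rho x (rho y v) - rho y (rho x v))].

Definition is_diff_rep (D : g -> g) (rho : g -> V -> V) (K : V -> V) : Prop :=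
  (forall (a : R) u v, K (a *: u + v) = a *: K u + K v) /\
  (forall x u, K (rho x u) = rho (D x) u + rho x (K u) + rho (D x) (K u)).

Definition cochain (n : nat) := {ffun 'I_n -> g} -> V.

Definition upd n (x : {ffun 'I_n -> g}) (i : 'I_n) (u : g) : {ffun 'I_n -> g} :=
  [ffun k => if k == i then u else x k].

Definition hom_wedge n (f : cochain n) : Prop :=
  (forall (x : {ffun 'I_n -> g}) (i : 'I_n) (a : R) (u v : g),
      f (upd x i (a *: u + v)) = a *: f (upd x i u) + f (upd x i v)) /\
  (forall (x : {ffun 'I_n -> g}) (i j : 'I_n), i != j -> x i = x j -> f x = 0).

Definition skip n (i : 'I_n.+1) (x : {ffun 'I_n.+1 -> g}) : {ffun 'I_n -> g} :=
  [ffun k => x (lift i k)].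

Definition cons0 n (a : g) (y : {ffun 'I_n -> g}) : {ffun 'I_n.+1 -> g} :=
  [ffun k => if unlift ord0 k is Some k' then y k' else a].

(* generic Chevalley--Eilenberg-type formula with action act (0-indexed, so the
   signs (-1)^(i+1), (-1)^(i+j) of the 1-indexed formula become (-1)^i, (-1)^(i+j)) *)
Definition ce_formula (br : g -> g -> g) (act : g -> V -> V) m (f : cochain m.+1)
  : cochain m.+2 := fun x =>
  \sum_(i < m.+2) (-1) ^+ i *: act (x i) (f (skip i x)) +
  \sum_(i < m.+2) \sum_(j < m.+2 | (i < j)%N)
     (-1) ^+ (i + j) *: f (cons0 (br (x i) (x j)) (skip (inord i) (skip j x))).

Definition dCE br (rho : g -> V -> V) m (f : cochain m.+1) : cochain m.+2 :=
  ce_formula br rho f.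

Definition dpartial br (rho : g -> V -> V) (D : g -> g) m (th : cochain m.+1)
  : cochain m.+2 :=
  ce_formula br (fun x v => rho x v + rho (D x) v) th.

Definition Top (D : g -> g) (K : V -> V) n (f : cochain n) : cochain n := fun x =>
  (-1) ^+ n *: (\sum_(S : {set 'I_n} | S != set0)
                   f [ffun j => if j \in S then D (x j) else x j]
                - K (f x)).

Definition addc n (a b : cochain n) : cochain n := fun x => a x + b x.

Definition delta1 br rho D K (f : cochain 1) : cochain 2 * cochain 1 :=
  (dCE br rho f, Top D K f).

Definition delta br rho D K m (p : cochain m.+2 * cochain m.+1)
  : cochain m.+3 * cochain m.+2 :=
  (dCE br rho p.1, addc (dpartial br rho D p.2) (Top D K p.1)).

End DiffLie.

(* Main.v *)
Require Import Defs.
From HB Require Import structures.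
From mathcomp Require Import all_boot all_order all_algebra ssrAC.
Import GRing.Theory.
Local Open Scope ring_scope.

Set Implicit Arguments. Unset Strict Implicit. Unset Printing Implicit Defensive.


Section Ffun.
Variables (R : fieldType) (g : lmodType R).

Lemma cons0_0 n (a : g) (y : {ffun 'I_n -> g}) : cons0 a y ord0 = a.
Proof. by rewrite ffunE unlift_none. Qed.

Lemma cons0_lift n (a : g) (y : {ffun 'I_n -> g}) k : cons0 a y (lift ord0 k) = y k.
Proof. by rewrite ffunE liftK. Qed.

Lemma skip0_cons0 n (a : g) (y : {ffun 'I_n -> g}) : skip ord0 (cons0 a y) = y.
Proof. by apply/ffunP => k; rewrite ffunE cons0_lift. Qed.

Lemma skipS_cons0 n (a : g) (y : {ffun 'I_n.+1 -> g}) j :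
  skip (lift ord0 j) (cons0 a y) = cons0 a (skip j y).
Proof.
apply/ffunP => k; rewrite ffunE.
case: (unliftP ord0 k) => [k'|] ->.
  have -> : lift (lift ord0 j) (lift ord0 k') = lift ord0 (lift j k').
    apply: val_inj; by rewrite /= /bump /= !add1n ltnS addnS.
  by rewrite !cons0_lift ffunE.
have -> : lift (lift ord0 j) ord0 = ord0 :> 'I_n.+2 by apply: val_inj.
by rewrite !cons0_0.
Qed.

Lemma inordS k i : (i < k.+1)%N -> (inord i.+1 : 'I_k.+2) = lift ord0 (inord i : 'I_k.+1).
Proof. by move=> h; apply: val_inj; rewrite /= /bump /= !inordK // ltnS. Qed.

Lemma inord0 n : (inord 0 : 'I_n.+1) = ord0.
Proof. by apply: val_inj; rewrite /= inordK. Qed.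

Lemma cons0_skip n (x : {ffun 'I_n.+1 -> g}) : x = cons0 (x ord0) (skip ord0 x).
Proof.
apply/ffunP => k; case: (unliftP ord0 k) => [k'|] ->.
  by rewrite cons0_lift ffunE.
by rewrite cons0_0.
Qed.

Lemma upd_cons0_0 n (a u : g) (y : {ffun 'I_n -> g}) : upd (cons0 a y) ord0 u = cons0 u y.
Proof.
apply/ffunP => k; rewrite ffunE; case: (unliftP ord0 k) => [k'|] ->.
  by rewrite !cons0_lift.
by rewrite eqxx cons0_0.
Qed.

Lemma upd_cons0_S n (a u : g) (y : {ffun 'I_n -> g}) i :
  upd (cons0 a y) (lift ord0 i) u = cons0 a (upd y i u).
Proof.
apply/ffunP => k; rewrite ffunE; case: (unliftP ord0 k) => [k'|] ->.
  by rewrite !cons0_lift ffunE (inj_eq (@lift_inj _ ord0)).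
by rewrite cons0_0 cons0_0.
Qed.

End Ffun.

Section LinF.
Variables (R : fieldType) (U W : lmodType R) (f : U -> W).
Hypothesis hf : forall (c : R) u v, f (c *: u + v) = c *: f u + f v.
Lemma linf0 : f 0 = 0.
Proof. have := hf 1 0 0; rewrite !scale1r addr0 => e. by apply: (@addrI _ (f 0)); rewrite addr0 -e. Qed.
Lemma linfD u v : f (u + v) = f u + f v.
Proof. by have := hf 1 u v; rewrite !scale1r. Qed.
Lemma linfZ c u : f (c *: u) = c *: f u.
Proof. by rewrite -[c *: u]addr0 hf linf0 addr0. Qed.
Lemma linfN u : f (- u) = - f u.
Proof. by rewrite -scaleN1r linfZ scaleN1r. Qed.
Lemma linfB u v : f (u - v) = f u - f v.
Proof. by rewrite linfD linfN. Qed.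
Lemma linf_sum I (r : seq I) (P : pred I) (F : I -> U) :
  f (\sum_(i <- r | P i) F i) = \sum_(i <- r | P i) f (F i).
Proof. exact: (big_morph f linfD linf0). Qed.
End LinF.

Section OpLin.
Variables (R : fieldType) (g V : lmodType R) (n m : nat).
Variable op : cochain g V n -> cochain g V m.
Hypothesis hop : forall (c : R) (h h1 h2 : cochain g V n),
  (forall y, h y = c *: h1 y + h2 y) -> forall x, op h x = c *: op h1 x + op h2 x.

Lemma op_z x : op (fun _ => 0) x = 0.
Proof.
have H : forall y : {ffun 'I_n -> g}, (fun _ => (0:V)) y = 1 *: (fun _ => (0:V)) y + (fun _ => 0) y.
  by move=> y; rewrite /= scale1r addr0.
have e := hop H x; rewrite scale1r in e.
by apply: (@addrI _ (op (fun _ => 0) x)); rewrite addr0 -e.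
Qed.
Lemma op_ext h h1 : (forall y, h y = h1 y) -> forall x, op h x = op h1 x.
Proof.
move=> e x; rewrite (hop (c := 1) (h1 := h1) (h2 := fun _ => 0)) ?op_z ?scale1r ?addr0 //.
by move=> y; rewrite e scale1r addr0.
Qed.
Lemma op_add h h1 h2 : (forall y, h y = h1 y + h2 y) -> forall x, op h x = op h1 x + op h2 x.
Proof. by move=> e x; rewrite (hop (c := 1) (h1 := h1) (h2 := h2)) ?scale1r // => y; rewrite scale1r. Qed.
Lemma op_sub h h1 h2 : (forall y, h y = h1 y - h2 y) -> forall x, op h x = op h1 x - op h2 x.
Proof.
move=> e x; rewrite (hop (c := -1) (h1 := h2) (h2 := h1)) ?scaleN1r ?[_ + op h1 x]addrC //.
by move=> y; rewrite e scaleN1r addrC.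
Qed.
Lemma op_opp h h1 : (forall y, h y = - h1 y) -> forall x, op h x = - op h1 x.
Proof.
move=> e x; rewrite (hop (c := -1) (h1 := h1) (h2 := fun _ => 0)) ?op_z ?scaleN1r ?addr0 //.
by move=> y; rewrite e scaleN1r addr0.
Qed.
Lemma op_zero h : (forall y, h y = 0) -> forall x, op h x = 0.
Proof.
move=> e x; rewrite (op_sub (h1 := h) (h2 := h)) ?subrr // => y; by rewrite e subrr.
Qed.
Lemma op_scale (c : R) h h1 : (forall y, h y = c *: h1 y) -> forall x, op h x = c *: op h1 x.
Proof.
move=> e x; rewrite (hop (c := c) (h1 := h1) (h2 := fun _ => 0)) ?op_z ?addr0 //.
by move=> y; rewrite e addr0.
Qed.
End OpLin.

Section Good.
Variables (R : fieldType) (g V : lmodType R).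
Definition ins n (a : g) (f : cochain g V n.+1) : cochain g V n := fun y => f (cons0 a y).
Definition lin0 n (f : cochain g V n.+1) := forall (c : R) u v y,
  f (cons0 (c *: u + v) y) = c *: f (cons0 u y) + f (cons0 v y).
Definition asym n (f : cochain g V n.+2) := forall a b z,
  f (cons0 a (cons0 b z)) = - f (cons0 b (cons0 a z)).
Definition asymG n : cochain g V n.+1 -> Prop :=
  match n return cochain g V n.+1 -> Prop with
  | 0 => fun _ => True
  | k.+1 => fun f => asym f
  end.
Fixpoint Good n : cochain g V n -> Prop :=
  match n return cochain g V n -> Prop with
  | 0 => fun _ => True
  | k.+1 => fun f => [/\ lin0 f, (forall a, Good (ins a f)) & asymG f]
  end.
End Good.

Lemma alg1 (V : zmodType) (X Y F D : V) : X - F - (Y - D) = - (Y - - F - (X - - D)).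
Proof. by rewrite !opprD !opprK !addrA [LHS](@GRing.add V).[ACl (3*2*1*4)]. Qed.

Lemma alg2 (V : zmodType) (P Q M N F1 F2 : V) :
  (P - M - (N - F1)) - (Q - N - (M - F2)) = (P - Q) + (F1 - F2).
Proof. by rewrite !opprD !opprK !addrA [LHS](@GRing.add V).[ACl (1*5*4*8*2*7*3*6)] !subrK ?addrA. Qed.
Lemma alg3 (V : zmodType) (P Q R M N : V) : P - Q = R ->
  (P - M) - (R - N) = Q - (M - N).
Proof. by move=> <-; rewrite !opprD !opprK !addrA [LHS](@GRing.add V).[ACl (4*2*5*1*3)] addrK. Qed.

Section Cartan.
Variables (R : fieldType) (g V : lmodType R) (br : g -> g -> g) (act : g -> V -> V).
Hypothesis Hbr : is_lie_bracket br.
Hypothesis Hact : is_lie_rep br act.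

Definition theta n (a : g) : cochain g V n -> cochain g V n :=
  match n return cochain g V n -> cochain g V n with
  | 0 => fun _ _ => 0
  | m.+1 => fun f y => \sum_(j < m.+1) (-1) ^+ j *: f (cons0 (br a (y j)) (skip j y))
  end.
Definition L n a (f : cochain g V n) : cochain g V n := fun y => act a (f y) - theta a f y.
Definition dg n : cochain g V n -> cochain g V n.+1 :=
  match n return cochain g V n -> cochain g V n.+1 with
  | 0 => fun f x => act (x ord0) (f (skip ord0 x))
  | m.+1 => fun f => ce_formula br act f
  end.

Lemma actDv x : forall (c : R) u v, act x (c *: u + v) = c *: act x u + act x v.
Proof. by case: Hact => _ h _ c u v; apply: h. Qed.
Lemma actDx (c : R) x y v : act (c *: x + y) v = c *: act x v + act y v.
Proof. by case: Hact => h _ _; apply: h. Qed.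

Lemma bump0 n : bump 0 n = n.+1.
Proof. by []. Qed.

Lemma ce_cons0 m (f : cochain g V m.+1) a y :
 ce_formula br act f (cons0 a y) =
   act a (f y) - \sum_(k < m.+1) (-1)^+k *: act (y k) (f (cons0 a (skip k y)))
   - \sum_(j < m.+1) (-1) ^+ j *: f (cons0 (br a (y j)) (skip j y))
   + \sum_(i < m.+1) \sum_(j < m.+1 | (i < j)%N) (-1)^+(i+j) *:
        f (cons0 (br (y i) (y j)) (skip (inord i.+1) (cons0 a (skip j y)))).
Proof.
rewrite /ce_formula.
have -> : \sum_(i < m.+2) (-1) ^+ i *: act (cons0 a y i) (f (skip i (cons0 a y))) =
   act a (f y) - \sum_(k < m.+1) (-1)^+k *: act (y k) (f (cons0 a (skip k y))).
  rewrite big_ord_recl cons0_0 skip0_cons0 expr0 scale1r; congr (_ + _).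
  rewrite -sumrN; apply: eq_bigr => k _.
  by rewrite cons0_lift skipS_cons0 lift0 exprS mulN1r scaleNr.
rewrite -!addrA; congr (_ + _); congr (_ + _).
rewrite big_ord_recl; congr (_ + _).
  rewrite big_mkcond big_ord_recl /= add0r -sumrN; apply: eq_bigr => j _.
  rewrite bump0 inord0 cons0_0 cons0_lift skipS_cons0 skip0_cons0.
  by rewrite add0n exprS mulN1r scaleNr.
apply: eq_bigr => i _.
rewrite big_mkcond big_ord_recl /= add0r [in RHS]big_mkcond; apply: eq_bigr => j _.
rewrite !bump0 ltnS; case: ifP => // _.
by rewrite !cons0_lift skipS_cons0 addSn addnS !exprS mulN1r mulNr mul1r opprK.
Qed.


Lemma brDl (c : R) x y z : br (c *: x + y) z = c *: br x z + br y z.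
Proof. by case: Hbr => h _ _ _; apply: h. Qed.
Lemma brDr (c : R) x y z : br z (c *: x + y) = c *: br z x + br z y.
Proof. by case: Hbr => _ h _ _; apply: h. Qed.
Lemma brxx x : br x x = 0.
Proof. by case: Hbr => _ _ h _; apply: h. Qed.
Lemma br_jacobi x y z : br x (br y z) + br y (br z x) + br z (br x y) = 0.
Proof. by case: Hbr => _ _ _ h; apply: h. Qed.
Lemma brDl1 x y z : br (x + y) z = br x z + br y z.
Proof. exact: (linfD (f := br ^~ z) (fun c u v => brDl c u v z)). Qed.
Lemma brDr1 x y z : br z (x + y) = br z x + br z y.
Proof. exact: (linfD (f := br z) (fun c u v => brDr c u v z)). Qed.
Lemma br_anti x y : br x y = - br y x.
Proof.
have := brxx (x + y); rewrite brDl1 !brDr1 !brxx add0r addr0 => /eqP.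
by rewrite addr_eq0 => /eqP.
Qed.
Lemma brNl x y : br (- x) y = - br x y.
Proof. exact: (linfN (f := br ^~ y) (fun c u v => brDl c u v y)). Qed.
Lemma brBl x y z : br (x - y) z = br x z - br y z.
Proof. exact: (linfB (f := br ^~ z) (fun c u v => brDl c u v z)). Qed.

Lemma R1_0 (f : cochain g V 1) a y :
  ins a (dg f) y = L a f y - dg (ins a f) y.
Proof.
rewrite /ins /= ce_cons0 /L /= big_ord1 [X in _ + X = _]big1 ?addr0; last first.
  by move=> i _; rewrite big_pred0 // => j; rewrite (ord1 i) (ord1 j).
rewrite expr0 scale1r big_ord1 expr0 scale1r.
by rewrite addrAC.
Qed.

Lemma R1_S k (f : cochain g V k.+2) a y : asym f ->
  ins a (dg f) y = L a f y - dg (ins a f) y.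
Proof.
move=> hf; rewrite /ins /= ce_cons0 /L /= /ce_formula /ins.
set A := \sum_(i < k.+2) _; set B := \sum_(i < k.+2) _.
set C := \sum_(i < k.+2) _; set C' := \sum_(i < k.+2) _.
have -> : C' = - A.
  rewrite /A /C' -sumrN; apply: eq_bigr => i _; rewrite -sumrN; apply: eq_bigr => j hij.
  have hi : (i < k.+1)%N by rewrite -ltnS (leq_trans _ (ltn_ord j)) // ltnS.
  by rewrite inordS // skipS_cons0 hf scalerN.
by rewrite opprD !addrA [_ - B - C]addrAC.
Qed.

Lemma R2 n (f : cochain g V n.+1) a b y : asymG f ->
  ins b (L a f) y = L a (ins b f) y - ins (br a b) f y.
Proof.
move=> hf; rewrite /ins /L /= big_ord_recl cons0_0 skip0_cons0 expr0 scale1r.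
rewrite opprD addrA addrAC; congr (_ - _); congr (_ - _).
case: n f hf y => [|k] f hf y /=; first by rewrite big_ord0.
apply: eq_bigr => j _; rewrite cons0_lift skipS_cons0 bump0 hf exprS mulN1r.
by rewrite scaleNr scalerN opprK.
Qed.

Section Lin.
Variable n : nat.
Lemma theta_lin a (c : R) (h h1 h2 : cochain g V n) :
  (forall y, h y = c *: h1 y + h2 y) -> forall x, theta a h x = c *: theta a h1 x + theta a h2 x.
Proof.
case: n h h1 h2 => [|k] h h1 h2 e x /=; first by rewrite scaler0 addr0.
rewrite scaler_sumr -big_split; apply: eq_bigr => j _.
by rewrite e scalerDr !scalerA mulrC.
Qed.
Lemma L_lin a (c : R) (h h1 h2 : cochain g V n) :
  (forall y, h y = c *: h1 y + h2 y) -> forall x, L a h x = c *: L a h1 x + L a h2 x.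
Proof.
move=> e x; rewrite /L (theta_lin a e) e actDv scalerBr opprD !addrA; congr (_ - _).
by rewrite addrAC.
Qed.
Lemma dg_lin (c : R) (h h1 h2 : cochain g V n) :
  (forall y, h y = c *: h1 y + h2 y) -> forall x, dg h x = c *: dg h1 x + dg h2 x.
Proof.
case: n h h1 h2 => [|k] h h1 h2 e x /=; first by rewrite e actDv.
rewrite /ce_formula scalerDr !scaler_sumr addrACA -!big_split /=.
apply: eq_bigr => i _; congr (_ + _).
  by rewrite e actDv scalerDr !scalerA mulrC.
rewrite scaler_sumr -big_split; apply: eq_bigr => j _.
by rewrite e scalerDr !scalerA mulrC.
Qed.
End Lin.


Lemma R1 k (f : cochain g V k.+1) a y : asymG f ->
  ins a (dg f) y = L a f y - dg (ins a f) y.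
Proof. by case: k f y => [|k] f y hf; [exact: R1_0 | exact: R1_S]. Qed.

Definition dg_ext n := op_ext (@dg_lin n).
Definition dg_sub n := op_sub (@dg_lin n).
Definition dg_opp n := op_opp (@dg_lin n).
Definition L_ext n a := op_ext (@L_lin n a).
Definition L_sub n a := op_sub (@L_lin n a).
Definition L_opp n a := op_opp (@L_lin n a).

Lemma Good_lin n (c : R) (h h1 h2 : cochain g V n) :
  Good h1 -> Good h2 -> (forall y, h y = c *: h1 y + h2 y) -> Good h.
Proof.
elim: n h h1 h2 => [//|n IH] h h1 h2 [l1 i1 a1] [l2 i2 a2] e; split.
- move=> c' u v y; rewrite !e l1 l2 !scalerDr !scalerA mulrC addrACA.
  done.
- by move=> a; apply: (IH _ _ _ (i1 a) (i2 a)) => y; rewrite /ins e.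
- case: n h h1 h2 {IH i1 i2} l1 l2 a1 a2 e => [//|k] h h1 h2 l1 l2 a1 a2 e /=.
  by move=> a b z; rewrite !e a1 a2 scalerN opprD.
Qed.
Lemma Good_ext n (h h1 : cochain g V n) : Good h1 -> (forall y, h y = h1 y) -> Good h.
Proof. by move=> g1 e; apply: (Good_lin (c := 0) g1 g1) => y; rewrite scale0r add0r. Qed.
Lemma Good_sub n (h h1 h2 : cochain g V n) : Good h1 -> Good h2 ->
  (forall y, h y = h1 y - h2 y) -> Good h.
Proof. by move=> g1 g2 e; apply: (Good_lin (c := -1) g2 g1) => y; rewrite scaleN1r e addrC. Qed.

Lemma lin0N n (f : cochain g V n.+1) u y : lin0 f -> f (cons0 (- u) y) = - f (cons0 u y).
Proof. by move=> hf; apply: (linfN (f := fun u => f (cons0 u y))) => c u' v; apply: hf. Qed.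
Lemma lin0D n (f : cochain g V n.+1) u v y : lin0 f ->
  f (cons0 (u + v) y) = f (cons0 u y) + f (cons0 v y).
Proof. by move=> hf; apply: (linfD (f := fun u => f (cons0 u y))) => c u' v'; apply: hf. Qed.
Lemma lin0B n (f : cochain g V n.+1) u v y : lin0 f ->
  f (cons0 (u - v) y) = f (cons0 u y) - f (cons0 v y).
Proof. by move=> hf; apply: (linfB (f := fun u => f (cons0 u y))) => c u' v'; apply: hf. Qed.

Lemma GoodS_asym n (f : cochain g V n.+1) : Good f -> asymG f.
Proof. by case. Qed.

Lemma P2 n (f : cochain g V n) a : Good f -> Good (L a f).
Proof.
elim: n f a => [//|n IH] f a [l i hs]; split.
- move=> c u v y.
  have e := fun u => R2 a u y hs.
  rewrite /ins in e; rewrite !e.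
  rewrite (L_lin a (c := c) (h1 := ins u f) (h2 := ins v f)); last by move=> y'; rewrite /ins l.
  by rewrite brDr l opprD addrACA -scalerBr.
- move=> b; apply: (Good_sub (h1 := L a (ins b f)) (h2 := ins (br a b) f)).
  + by apply: IH; apply: i.
  + by apply: i.
  + by move=> y; rewrite R2.
- case: n f {IH} l i hs => [//|k] f l i hs /= b c z.
  have e := fun b c z => R2 a b (cons0 c z) hs.
  have asb := fun b => GoodS_asym (i b).
  have e2 := fun b c z => R2 a c z (asb b).
  rewrite /ins /= in e e2.
  rewrite !e !e2.
  rewrite (L_opp a (h1 := fun z => f (cons0 c (cons0 b z)))); last by move=> y; rewrite hs.
  rewrite [f (cons0 b (cons0 _ z))]hs [f (cons0 (br a b) (cons0 c z))]hs.
  by rewrite !opprD !opprK addrAC.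
Qed.

Lemma theta_lina n (f : cochain g V n) (c : R) u v y : Good f ->
  theta (c *: u + v) f y = c *: theta u f y + theta v f y.
Proof.
case: n f y => [|k] f y /=; first by rewrite scaler0 addr0.
case=> l _ _; rewrite scaler_sumr -big_split; apply: eq_bigr => j _.
by rewrite brDl l scalerDr !scalerA mulrC.
Qed.

Lemma L_lina n (f : cochain g V n) (c : R) u v y : Good f ->
  L (c *: u + v) f y = c *: L u f y + L v f y.
Proof.
move=> gf; rewrite /L (theta_lina _ _ _ _ gf) actDx scalerBr opprD addrACA //.
Qed.

Lemma P3 n (f : cochain g V n) : Good f -> Good (dg f).
Proof.
elim: n f => [|n IH] f gf.
  split=> //= c u v y; by rewrite !cons0_0 !skip0_cons0 actDx.
have hs := GoodS_asym gf.
have [l i _] := gf.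
split.
- move=> c u v y.
  have e : forall a, dg f (cons0 a y) = L a f y - dg (ins a f) y := fun a => R1 a y hs.
  rewrite !e L_lina // (dg_lin (c := c) (h1 := ins u f) (h2 := ins v f)); last by move=> y0; rewrite /ins l.
  by rewrite opprD addrACA -scalerBr.
- move=> a; apply: (Good_sub (h := ins a (dg f)) (h1 := L a f) (h2 := dg (ins a f))).
  + exact: P2.
  + by apply: IH; apply: i.
  + by move=> y; rewrite R1.
- case: n f IH gf hs l i => [|k] f IH gf hs l i; change (asym (dg f)) => a b z.
  + have e : forall a b, dg f (cons0 a (cons0 b z)) = L a f (cons0 b z) - dg (ins a f) (cons0 b z)
      := fun a b => R1 a (cons0 b z) hs.
    have e4 : forall a b, dg (ins a f) (cons0 b z) = act b (f (cons0 a z)).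
      by move=> a' b'; rewrite /= cons0_0 /ins skip0_cons0.
    rewrite !e !e4.
    have e2 : forall a b, L a f (cons0 b z) = L a (ins b f) z - f (cons0 (br a b) z)
      := fun a b => R2 a b z hs.
    rewrite !e2 /L /= !subr0 (br_anti b a) lin0N //.
    by rewrite /ins !opprD !opprK [LHS]addrC [LHS]addrA [RHS]addrAC.
  + have e : forall a b, dg f (cons0 a (cons0 b z)) = L a f (cons0 b z) - dg (ins a f) (cons0 b z)
      := fun a b => R1 a (cons0 b z) hs.
    rewrite !e.
    have e2 : forall a b, L a f (cons0 b z) = L a (ins b f) z - f (cons0 (br a b) z)
      := fun a b => R2 a b z hs.
    have e3 : forall a b, dg (ins a f) (cons0 b z) = L b (ins a f) z - dg (ins b (ins a f)) z
      := fun a b => R1 b z (GoodS_asym (i a)).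
    rewrite !e2 !e3 (br_anti b a) lin0N //.
    rewrite (dg_opp (h := ins a (ins b f)) (h1 := ins b (ins a f))); last by move=> y; apply: hs.
    exact: alg1.
Qed.

Lemma act_br x y v : act (br x y) v = act x (act y v) - act y (act x v).
Proof. by case: Hact => _ _ h; apply: h. Qed.
Lemma brDr_opp x y : br x (- y) = - br x y.
Proof. exact: (linfN (f := br x) (fun c u v => brDr c u v x)). Qed.

Lemma jac a b c : br b (br a c) - br a (br b c) = - br (br a b) c.
Proof.
have := br_jacobi a b c; rewrite [br c a]br_anti brDr_opp [br (br a b) c]br_anti.
by move=> /eqP; rewrite addr_eq0 => /eqP h; rewrite opprK -opprB h opprK.
Qed.

Lemma E n (f : cochain g V n) a b y : Good f ->
  L a (L b f) y - L b (L a f) y = L (br a b) f y.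
Proof.
elim: n f a b y => [|n IH] f a b y gf.
  by rewrite /L /= !subr0 act_br.
have hs := GoodS_asym gf; have [l i _] := gf.
rewrite (cons0_skip y); set c := y ord0; set z := skip ord0 y.
have e1 : forall a b, L a (L b f) (cons0 c z) = L a (L b (ins c f)) z - L a (ins (br b c) f) z
    - (L b (ins (br a c) f) z - f (cons0 (br b (br a c)) z)).
  move=> a' b'.
  have -> : L a' (L b' f) (cons0 c z) = L a' (ins c (L b' f)) z - ins (br a' c) (L b' f) z.
    exact: (R2 a' c z (GoodS_asym (P2 b' gf))).
  rewrite (L_sub a' (h1 := L b' (ins c f)) (h2 := ins (br b' c) f)); last first.
    by move=> y'; rewrite R2.
  by rewrite R2.
have -> : L (br a b) f (cons0 c z) = L (br a b) (ins c f) z - f (cons0 (br (br a b) c) z).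
  exact: (R2 (br a b) c z hs).
rewrite !e1 alg2 IH; last exact: i.
by rewrite -lin0B // jac lin0N.
Qed.

Lemma C n (f : cochain g V n) a y : Good f -> L a (dg f) y = dg (L a f) y.
Proof.
elim: n f a y => [|n IH] f a y gf.
  rewrite /L /= big_ord1 expr0 scale1r !cons0_0 !skip0_cons0 !subr0 act_br.
  by rewrite opprB addrC subrK.
have hs := GoodS_asym gf; have [l i _] := gf.
rewrite (cons0_skip y); set b := y ord0; set z := skip ord0 y.
have -> : L a (dg f) (cons0 b z) = L a (ins b (dg f)) z - ins (br a b) (dg f) z.
  exact: (R2 a b z (GoodS_asym (P3 gf))).
rewrite (L_sub a (h1 := L b f) (h2 := dg (ins b f))); last by move=> y'; rewrite R1.
have -> : dg (L a f) (cons0 b z) = L b (L a f) z - dg (ins b (L a f)) z.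
  exact: (R1 b z (GoodS_asym (P2 a gf))).
rewrite (dg_sub (h1 := L a (ins b f)) (h2 := ins (br a b) f)); last by move=> y'; rewrite R2.
rewrite R1 // IH; last exact: i.
by apply: alg3; apply: E.
Qed.

Lemma dd n (f : cochain g V n) x : Good f -> dg (dg f) x = 0.
Proof.
elim: n f x => [|n IH] f x gf.
  rewrite (cons0_skip x); set a := x ord0; set y := skip ord0 x.
  have -> : dg (dg f) (cons0 a y) = L a (dg f) y - dg (ins a (dg f)) y.
    exact: (R1 a y (GoodS_asym (P3 gf))).
  rewrite (dg_ext (h1 := L a f)) ?C ?subrr //.
  by move=> y'; rewrite /ins /L /= cons0_0 skip0_cons0 subr0.
have hs := GoodS_asym gf; have [l i _] := gf.
rewrite (cons0_skip x); set a := x ord0; set y := skip ord0 x.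
have -> : dg (dg f) (cons0 a y) = L a (dg f) y - dg (ins a (dg f)) y.
  exact: (R1 a y (GoodS_asym (P3 gf))).
rewrite (dg_sub (h1 := L a f) (h2 := dg (ins a f))); last by move=> y'; rewrite R1.
by rewrite IH ?subr0 ?C ?subrr //; apply: i.
Qed.
End Cartan.

Section HW.
Variables (R : fieldType) (g V : lmodType R).

Lemma HW_lin0 n (f : cochain g V n.+1) : hom_wedge f -> lin0 f.
Proof.
case=> hl _ c u v y.
have e w : cons0 w y = upd (cons0 0 y) ord0 w by rewrite upd_cons0_0.
by rewrite (e (c *: u + v)) (e u) (e v); apply: hl.
Qed.

Lemma HW_iota n (f : cochain g V n.+1) a : hom_wedge f -> hom_wedge (ins a f).
Proof.
case=> hl ha; split.
  by move=> y i c u v; rewrite /ins -!upd_cons0_S; apply: hl.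
move=> y i j hij hy; rewrite /ins; apply: (ha _ (lift ord0 i) (lift ord0 j)).
  by rewrite (inj_eq (@lift_inj _ ord0)).
by rewrite !cons0_lift.
Qed.

Lemma HW_Good n (f : cochain g V n) : hom_wedge f -> Good f.
Proof.
elim: n f => [//|n IH] f hf; split.
- exact: HW_lin0.
- by move=> a; apply: IH; apply: HW_iota.
case: n f {IH} hf => [//|k] f hf a b z /=.
have l := HW_lin0 hf.
have la := fun a => HW_lin0 (HW_iota a hf).
have [_ ha] := hf.
have z0 : forall u, f (cons0 u (cons0 u z)) = 0.
  move=> u; apply: (ha _ ord0 (lift ord0 ord0)) => //.
  by rewrite cons0_0 cons0_lift cons0_0.
have := z0 (a + b); rewrite lin0D //.
have e : forall u v w, f (cons0 u (cons0 (v + w) z)) = f (cons0 u (cons0 v z)) + f (cons0 u (cons0 w z)).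
  by move=> u v w; apply: (lin0D _ _ _ (la u)).
by rewrite !e !z0 add0r addr0 => /eqP; rewrite addr_eq0 => /eqP.
Qed.

Lemma Good_upd n (f : cochain g V n) x i u v : Good f ->
  f (upd x i (u + v)) = f (upd x i u) + f (upd x i v).
Proof.
elim: n f x i => [|n IH] f x i gf; first by case: i.
have [l gi _] := gf.
rewrite (cons0_skip x); case: (unliftP ord0 i) => [i'|] ->.
  by rewrite !upd_cons0_S; exact: (IH (ins (x ord0) f) (skip ord0 x) i' (gi (x ord0))).
by rewrite !upd_cons0_0 lin0D.
Qed.
End HW.

Section Expand.
Variables (R : fieldType) (g V : lmodType R) (D : g -> g) (n : nat) (h : cochain g V n).
Hypothesis Hadd : forall x i u v, h (upd x i (u + v)) = h (upd x i u) + h (upd x i v).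

Definition Dmap (S : {set 'I_n}) (x : {ffun 'I_n -> g}) : {ffun 'I_n -> g} :=
  [ffun j => if j \in S then D (x j) else x j].
Definition Phi (A : {set 'I_n}) (x : {ffun 'I_n -> g}) : {ffun 'I_n -> g} :=
  [ffun j => if j \in A then x j + D (x j) else x j].

Lemma expand (A : {set 'I_n}) x :
  \sum_(S : {set 'I_n} | S \subset A) h (Dmap S x) = h (Phi A x).
Proof.
elim: {A}_.+1 {-2}A (ltnSn #|A|) x => // k IHk A hA x.
case: (set_0Vmem A) => [-> | [i iA]].
  rewrite (big_pred1 set0); last by move=> S; rewrite subset0.
  congr h; apply/ffunP => j; by rewrite !ffunE in_set0.
have hA' : (#|A :\ i| < k)%N by rewrite -ltnS (leq_trans _ hA) // (cardsD1 i A) iA.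
rewrite (bigID (fun S : {set 'I_n} => i \in S)) /= addrC.
have -> : \sum_(S : {set 'I_n} | (S \subset A) && (i \notin S)) h (Dmap S x) =
          \sum_(S : {set 'I_n} | S \subset A :\ i) h (Dmap S x).
  by apply: eq_bigl => S; rewrite subsetD1.
have -> : \sum_(S : {set 'I_n} | (S \subset A) && (i \in S)) h (Dmap S x) =
          \sum_(S : {set 'I_n} | S \subset A :\ i) h (Dmap S (upd x i (D (x i)))).
  rewrite (reindex_onto (fun S => i |: S) (fun S => S :\ i)) /=; last first.
    by move=> S /andP [_ iS]; rewrite setD1K.
  apply: eq_big => S.
    rewrite setU11 andbT subsetD1 subUset sub1set iA /=.
    case iS: (i \in S); rewrite ?andbF ?andbT.
      apply/negbTE; rewrite negb_and; apply/orP; right.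
      by apply/eqP => /setP /(_ i); rewrite !inE eqxx iS.
    by rewrite setU1K ?iS // eqxx andbT.
  move=> /andP [_ /eqP eS].
  have niS : i \notin S by rewrite -eS !inE eqxx.
  congr h; apply/ffunP => j; rewrite !ffunE !inE.
  by case: (eqVneq j i) => [-> | nji] /=; rewrite ?(negbTE niS).
rewrite !IHk //.
have e : forall w, Phi (A :\ i) (upd x i w) = upd (Phi (A :\ i) x) i w.
  move=> w; apply/ffunP => j; rewrite !ffunE !inE.
  by case: (eqVneq j i) => [-> | nji] //=.
have e2 : Phi (A :\ i) x = upd (Phi (A :\ i) x) i (x i).
  apply/ffunP => j; rewrite !ffunE !inE.
  by case: (eqVneq j i) => [-> | nji] //=.
rewrite e {1}e2 -Hadd; congr h.
apply/ffunP => j; rewrite !ffunE !inE.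
case: (eqVneq j i) => [-> | nji] //=; first by rewrite iA.
Qed.
End Expand.

Section Final.
Variables (R : fieldType) (g V : lmodType R) (br : g -> g -> g) (D : g -> g)
  (rho : g -> V -> V) (K : V -> V).
Hypothesis Hbr : is_lie_bracket br.
Hypothesis HD : is_difference_op br D.
Hypothesis Hrho : is_lie_rep br rho.
Hypothesis HK : is_diff_rep D rho K.

Definition act' := fun x v => rho x v + rho (D x) v.
Definition phi u := u + D u.
Definition mapF n (x : {ffun 'I_n -> g}) : {ffun 'I_n -> g} := [ffun j => phi (x j)].
Definition Psi v := v + K v.

Lemma Dlin (c : R) x y : D (c *: x + y) = c *: D x + D y.
Proof. by case: HD. Qed.
Lemma Dbr x y : D (br x y) = br x (D y) - br y (D x) + br (D x) (D y).
Proof. by case: HD. Qed.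
Lemma Klin (c : R) u v : K (c *: u + v) = c *: K u + K v.
Proof. by case: HK. Qed.
Lemma Krho x u : K (rho x u) = rho (D x) u + rho x (K u) + rho (D x) (K u).
Proof. by case: HK. Qed.
Lemma rhoDx (c : R) x y v : rho (c *: x + y) v = c *: rho x v + rho y v.
Proof. by case: Hrho => h _ _; apply: h. Qed.
Lemma rhoDv x (c : R) u v : rho x (c *: u + v) = c *: rho x u + rho x v.
Proof. by case: Hrho => _ h _; apply: h. Qed.
Lemma rho_br x y v : rho (br x y) v = rho x (rho y v) - rho y (rho x v).
Proof. by case: Hrho => _ _ h; apply: h. Qed.

Lemma act'_phi x v : act' x v = rho (phi x) v.
Proof. by rewrite /act' /phi (linfD (f := rho ^~ v)) // => c u w; apply: rhoDx. Qed.

Lemma phi_br x y : br (phi x) (phi y) = phi (br x y).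
Proof.
rewrite /phi Dbr (brDl1 Hbr) !(brDr1 Hbr) [br (D x) y](br_anti Hbr).
by rewrite !addrA.
Qed.

Lemma act'_rep : is_lie_rep br act'.
Proof.
split.
- move=> c x y v; rewrite /act' Dlin !rhoDx scalerDr.
  by rewrite !addrA [LHS](@GRing.add V).[ACl (1*3*2*4)].
- move=> c x u v; rewrite /act' !rhoDv scalerDr.
  by rewrite !addrA [LHS](@GRing.add V).[ACl (1*3*2*4)].
- by move=> x y v; rewrite !act'_phi -phi_br rho_br.
Qed.

Lemma skip_mapF n (i : 'I_n.+1) x : skip i (mapF x) = mapF (skip i x).
Proof. by apply/ffunP => k; rewrite !ffunE. Qed.
Lemma mapF_cons0 n a (y : {ffun 'I_n -> g}) : mapF (cons0 a y) = cons0 (phi a) (mapF y).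
Proof.
apply/ffunP => k; rewrite ffunE; case: (unliftP ord0 k) => [k'|] ->.
  by rewrite !cons0_lift ffunE.
by rewrite !cons0_0.
Qed.

Lemma ce_Phi m (h : cochain g V m.+1) x :
  ce_formula br act' (fun y => h (mapF y)) x = ce_formula br rho h (mapF x).
Proof.
rewrite /ce_formula; congr (_ + _); apply: eq_bigr => i _.
  by rewrite act'_phi skip_mapF ffunE.
apply: eq_bigr => j _; congr (_ *: h _).
by rewrite mapF_cons0 !skip_mapF !ffunE phi_br.
Qed.

Lemma Psi_lin (c : R) u v : Psi (c *: u + v) = c *: Psi u + Psi v.
Proof.
rewrite /Psi Klin scalerDr.
by rewrite !addrA [LHS](@GRing.add V).[ACl (1*3*2*4)].
Qed.

Lemma Psi_rho u v : Psi (rho u v) = act' u (Psi v).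
Proof.
rewrite /Psi /act' Krho (linfD (rhoDv u)) (linfD (rhoDv (D u))).
by rewrite !addrA [LHS](@GRing.add V).[ACl (1*3*2*4)].
Qed.

Lemma ce_Psi m (h : cochain g V m.+1) x :
  ce_formula br act' (fun y => Psi (h y)) x = Psi (ce_formula br rho h x).
Proof.
rewrite /ce_formula (linfD Psi_lin) !(linf_sum Psi_lin); congr (_ + _).
  by apply: eq_bigr => i _; rewrite (linfZ Psi_lin) Psi_rho.
apply: eq_bigr => i _; rewrite (linf_sum Psi_lin); apply: eq_bigr => j _.
by rewrite (linfZ Psi_lin).
Qed.

Lemma Top_eq n (h : cochain g V n) x : Good h ->
  Top D K h x = (-1) ^+ n *: (h (mapF x) - Psi (h x)).
Proof.
move=> gh.
have E := expand D (fun x i u v => Good_upd x i u v gh) setT x.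
rewrite (eq_bigl (fun _ => true)) in E; last by move=> S; rewrite subsetT.
rewrite (bigD1 set0) //= /Dmap in E.
have eP : Phi D setT x = mapF x by apply/ffunP => j; rewrite !ffunE inE.
have e0 : [ffun j => if j \in set0 then D (x j) else x j] = x.
  by apply/ffunP => j; rewrite ffunE inE.
rewrite e0 eP in E; rewrite /Top -E /Psi; congr (_ *: _).
by rewrite [in RHS]opprD [in RHS]addrA [h x + _]addrC addrK.
Qed.

Lemma key m (f : cochain g V m.+1) y : Good f ->
  dg br act' (Top D K f) y + Top D K (dg br rho f) y = 0.
Proof.
move=> gf.
have H' := act'_rep.
rewrite (dg_ext H' (h1 := fun x => (-1) ^+ m.+1 *: (f (mapF x) - Psi (f x)))); last first.
  by move=> x; rewrite Top_eq.
rewrite (op_scale (@dg_lin _ _ _ _ _ H' m.+1) (c := (-1) ^+ m.+1) (h1 := fun x => f (mapF x) - Psi (f x))) //.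
rewrite (dg_sub H' (h1 := fun x => f (mapF x)) (h2 := fun x => Psi (f x))) //.
rewrite /= ce_Phi ce_Psi Top_eq; last exact: (P3 Hbr Hrho gf).
by rewrite [_ ^+ m.+2]exprS mulN1r scaleNr addrN.
Qed.
End Final.

Unset Implicit Arguments.

Theorem theorem4p10 (R : fieldType) (g V : lmodType R)
  (br : g -> g -> g) (D : g -> g) (rho : g -> V -> V) (K : V -> V) :
  is_lie_bracket br -> is_difference_op br D ->
  is_lie_rep br rho -> is_diff_rep D rho K ->
  (forall f : cochain g V 1, hom_wedge f ->
     let p := delta br rho D K (delta1 br rho D K f) in
     (forall x, p.1 x = 0) /\ (forall y, p.2 y = 0)) /\
  (forall (m : nat) (f : cochain g V m.+2) (th : cochain g V m.+1),
     hom_wedge f -> hom_wedge th ->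
     let p := delta br rho D K (delta br rho D K (f, th)) in
     (forall x, p.1 x = 0) /\ (forall y, p.2 y = 0)).
Proof.
move=> Hbr HD Hrho HK.
have H' := act'_rep Hbr HD Hrho.
split.
- move=> f hf p; have gf := HW_Good hf; split => x.
  + change (dg br rho (dg br rho f) x = 0); exact: (dd Hbr Hrho x gf).
  + change (dg br (act' D rho) (Top D K f) x + Top D K (dg br rho f) x = 0).
    exact: (key Hbr HD Hrho HK x gf).
- move=> m f th hf hth p; have gf := HW_Good hf; have gth := HW_Good hth; split => x.
  + change (dg br rho (dg br rho f) x = 0); exact: (dd Hbr Hrho x gf).
  + change (dg br (act' D rho) (addc (dg br (act' D rho) th) (Top D K f)) x
            + Top D K (dg br rho f) x = 0).
    rewrite (op_add (@dg_lin _ _ _ _ _ H' m.+2) (h1 := dg br (act' D rho) th) (h2 := Top D K f)) //.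
    by rewrite (dd Hbr H' x gth) add0r (key Hbr HD Hrho HK x gf).
Qed.
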